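(* In the 1SDI setting where Alice measures $A_0=\sigma_x$, $A_1=\sigma_y$, Bob measures $B_0=\sigma_x$, $B_1=\sigma_y$, and Charlie is a black box, the Mermin family $P^V_{MF}$ ($0<V\le1$) demonstrates genuine tripartite steering (i.e. admits no 1SDI steering LHS-LHV model) if and only if $V>\frac1{\sqrt2}$.
   Context: Outcomes and settings: $a,b,c,x,y,z\in\{0,1\}$. For a qubit observable $O$ with eigenvalues $\pm1$, the measurement has projectors $M_0=(\mathbb 1+O)/2$, $M_1=(\mathbb 1-O)/2$; $M^A_{a|x}$, $M^B_{b|y}$ denote the projectors of $A_x$, $B_y$. Mermin family: $P^V_{MF}(abc|xyz)=\frac{1+(-1)^{a\oplus b\oplus c\oplus xy\oplus yz\oplus xz}\,\delta_{x\oplus y\oplus1,z}\,V}{8}$. 1SDI steering LHS-LHV (StLHS) model: $P(abc|xyz)=\sum_\lambda r_\lambda \mathrm{Tr}[(M^A_{a|x}\otimes M^B_{b|y})\rho^\lambda_{AB}]P_\lambda(c|z)+\sum_\lambda p_\lambda \mathrm{Tr}(M^A_{a|x}\rho^\lambda_A)P^Q_\lambda(bc|yz)+\sum_\lambda q_\lambda \mathrm{Tr}(M^B_{b|y}\rho^\lambda_B)P^Q_\lambda(ac|xz)$, with nonnegative weights summing to 1, $\rho^\lambda_{AB}$ two-qubit states, $\rho^\lambda_A,\rho^\lambda_B$ qubit states, $P_\lambda(c|z)$ arbitrary conditional distributions, and $P^Q_\lambda(bc|yz)=\mathrm{Tr}[(M^B_{b|y}\otimes N^\lambda_{c|z})\tau^\lambda_{BC}]$,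 $P^Q_\lambda(ac|xz)=\mathrm{Tr}[(M^A_{a|x}\otimes N^\lambda_{c|z})\tau^\lambda_{AC}]$ for states $\tau^\lambda$ on $\mathbb C^2\otimes\mathbb C^d$ and POVMs $\{N^\lambda_{c|z}\}_c$ on $\mathbb C^d$. A correlation demonstrates genuine tripartite steering in the 1SDI scenario iff it admits no StLHS model. *)

(* Defs.v *)
From HB Require Import structures.
From mathcomp Require Import all_boot all_order all_algebra.
Set Implicit Arguments. Unset Strict Implicit. Unset Printing Implicit Defensive.
Import Order.TTheory GRing.Theory Num.Theory.
Local Open Scope ring_scope.

Section QDefs.
Variable C : numClosedFieldType.

Definition dagger m n (A : 'M[C]_(m, n)) : 'M[C]_(n, m) := (map_mx Num.conj A)^T.

Definition psd n (A : 'M[C]_n) : Prop :=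
  dagger A = A /\ forall v : 'cV[C]_n, 0 <= (dagger v *m A *m v) 0 0.

Definition is_state n (rho : 'M[C]_n) : Prop := psd rho /\ \tr rho = 1.

Definition is_povm d (N : bool -> 'M[C]_d) : Prop :=
  (forall c, psd (N c)) /\ N false + N true = 1%:M.

Definition is_cond_distr (P : bool -> bool -> C) : Prop :=
  (forall c z, 0 <= P c z) /\ (forall z, P false z + P true z = 1).

(* Kronecker (tensor) product A (x) B, with the basis of C^m (x) C^n indexed
   by 'I_(m*n) through the standard MathComp bijection used by mxvec *)
Definition tens_idx m n (k : 'I_(m * n)) : 'I_m * 'I_n :=
  enum_val (cast_ord (esym (mxvec_cast m n)) k).

Definition kron m n (A : 'M[C]_m) (B : 'M[C]_n) : 'M[C]_(m * n) :=
  \matrix_(k, l) (A (tens_idx k).1 (tens_idx l).1 * B (tens_idx k).2 (tens_idx l).2).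

Definition sigma_x : 'M[C]_2 := \matrix_(i, j) (if i == j then 0 else 1).
Definition sigma_y : 'M[C]_2 :=
  \matrix_(i, j) (if i == j then 0 else if i == 0 then - 'i else 'i).

Definition proj_of (O : 'M[C]_2) (a : bool) : 'M[C]_2 :=
  2^-1 *: (1%:M + (-1) ^+ a *: O).

Definition obsA (x : bool) : 'M[C]_2 := if x then sigma_y else sigma_x.
Definition obsB (y : bool) : 'M[C]_2 := if y then sigma_y else sigma_x.
Definition MA (a x : bool) : 'M[C]_2 := proj_of (obsA x) a.
Definition MB (b y : bool) : 'M[C]_2 := proj_of (obsB y) b.

Definition mermin (V : C) (a b c x y z : bool) : C :=
  (1 + (-1) ^+ (a (+) b (+) c (+) (x && y) (+) (y && z) (+) (x && z))
       * (((x (+) y (+) true) == z)%:R) * V) / 8.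

(* 1SDI steering LHS-LHV (StLHS) model, finitely many hidden variables *)
Definition StLHS (P : bool -> bool -> bool -> bool -> bool -> bool -> C) : Prop :=
  exists (n1 n2 n3 : nat)
    (r : 'I_n1 -> C) (rhoAB : 'I_n1 -> 'M[C]_(2 * 2)) (PC : 'I_n1 -> bool -> bool -> C)
    (p : 'I_n2 -> C) (rhoA : 'I_n2 -> 'M[C]_2) (dB : 'I_n2 -> nat)
    (tauBC : forall l, 'M[C]_(2 * dB l)) (NB : forall l, bool -> bool -> 'M[C]_(dB l))
    (q : 'I_n3 -> C) (rhoB : 'I_n3 -> 'M[C]_2) (dA : 'I_n3 -> nat)
    (tauAC : forall l, 'M[C]_(2 * dA l)) (NA : forall l, bool -> bool -> 'M[C]_(dA l)),
    [/\ (forall l, 0 <= r l), (forall l, 0 <= p l), (forall l, 0 <= q l)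
        & \sum_l r l + \sum_l p l + \sum_l q l = 1] /\
    [/\ (forall l, is_state (rhoAB l) /\ is_cond_distr (PC l)),
        (forall l, [/\ is_state (rhoA l), is_state (tauBC l)
                     & forall z, is_povm (fun c => NB l c z)]),
        (forall l, [/\ is_state (rhoB l), is_state (tauAC l)
                     & forall z, is_povm (fun c => NA l c z)]) &
        forall a b c x y z,
          P a b c x y z =
            \sum_l r l * \tr (kron (MA a x) (MB b y) *m rhoAB l) * PC l c z
          + \sum_l p l * \tr (MA a x *m rhoA l)
                       * \tr (kron (MB b y) (NB l c z) *m tauBC l)
          + \sum_l q l * \tr (MB b y *m rhoB l)
                       * \tr (kron (MA a x) (NA l c z) *m tauAC l)].

Definition genuine_1SDI_steering (P : bool -> bool -> bool -> bool -> bool -> bool -> C) : Prop :=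
  ~ StLHS P.

End QDefs.

(* Main.v *)
Require Import Defs.
From HB Require Import structures.
From mathcomp Require Import all_boot all_order all_algebra.
From mathcomp Require Import ring.
Set Implicit Arguments. Unset Strict Implicit. Unset Printing Implicit Defensive.
Import Order.TTheory GRing.Theory Num.Theory.
Local Open Scope ring_scope.

Section Basics.
Variable C : numClosedFieldType.

Lemma tens_mxvec m n (i : 'I_m) (j : 'I_n) : tens_idx (mxvec_index i j) = (i, j).
Proof. by rewrite /tens_idx /mxvec_index cast_ordK enum_rankK. Qed.

Lemma kronE m n (A : 'M[C]_m) (B : 'M[C]_n) i j k l :
  kron A B (mxvec_index i j) (mxvec_index k l) = A i k * B j l.
Proof. by rewrite /kron mxE !tens_mxvec. Qed.

Lemma sum_mxvec m n (F : 'I_(m * n) -> C) :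
  \sum_k F k = \sum_i \sum_j F (mxvec_index i j).
Proof.
rewrite pair_big /=.
rewrite (reindex (fun p : 'I_m * 'I_n => mxvec_index p.1 p.2)) //=.
exists (fun k => tens_idx k) => [[i j] _ | k _] /=; first by rewrite tens_mxvec.
by case/mxvec_indexP: k => i j; rewrite tens_mxvec.
Qed.

Lemma sum2 (F : 'I_2 -> C) : \sum_(i < 2) F i = F 0 + F 1.
Proof. by rewrite big_ord_recr big_ord_recr big_ord0 /= add0r; congr (F _ + F _); apply: val_inj. Qed.

Lemma trE n (A B : 'M[C]_n) : \tr (A *m B) = \sum_i \sum_j A i j * B j i.
Proof. by rewrite /mxtrace; apply: eq_bigr => i _; rewrite mxE. Qed.

Lemma quadE n (v : 'cV[C]_n) (A : 'M[C]_n) :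
  (dagger v *m A *m v) 0 0 = \sum_i \sum_j Num.conj (v i 0) * A i j * v j 0.
Proof.
rewrite mxE; under eq_bigr do rewrite mxE big_distrl /=.
rewrite exchange_big /=; apply: eq_bigr => i _; apply: eq_bigr => j _.
by rewrite !mxE.
Qed.

Lemma tr_kron m n (A : 'M[C]_m) (B : 'M[C]_n) (R : 'M[C]_(m * n)) :
  \tr (kron A B *m R) = \sum_i \sum_j \sum_k \sum_l
     A i k * B j l * R (mxvec_index k l) (mxvec_index i j).
Proof.
rewrite trE sum_mxvec; apply: eq_bigr => i _; apply: eq_bigr => j _.
rewrite sum_mxvec; apply: eq_bigr => k _; apply: eq_bigr => l _.
by rewrite kronE.
Qed.

End Basics.

Section Psd.
Variable C : numClosedFieldType.

Lemma ord2P (i : 'I_2) : i = 0 \/ i = 1.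
Proof. by case: i => [[|[|]]] // H; [left|right]; apply: val_inj. Qed.

Lemma daggerK m n (A : 'M[C]_(m, n)) : dagger (dagger A) = A.
Proof. by apply/matrixP => i j; rewrite !mxE conjCK. Qed.

Lemma dagger_mul m n p (A : 'M[C]_(m, n)) (B : 'M[C]_(n, p)) :
  dagger (A *m B) = dagger B *m dagger A.
Proof. by rewrite /dagger map_mxM trmx_mul. Qed.

Lemma daggerE m n (A : 'M[C]_(m, n)) i j : dagger A i j = Num.conj (A j i).
Proof. by rewrite !mxE. Qed.

Lemma psd_conj n k (A : 'M[C]_n) (M : 'M[C]_(n, k)) :
  psd A -> psd (dagger M *m A *m M).
Proof.
move=> [hA qA]; split; first by rewrite !dagger_mul daggerK hA mulmxA.
move=> v; have := qA (M *m v).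
by rewrite dagger_mul !mulmxA.
Qed.

Lemma dagger_delta n (i : 'I_n) : dagger (delta_mx i 0 : 'cV[C]_n) = delta_mx 0 i.
Proof.
apply/matrixP => a b; rewrite !mxE.
by case: (_ == _); case: (_ == _); rewrite /= ?conjC1 ?conjC0.
Qed.

Lemma psd_diag n (A : 'M[C]_n) i : psd A -> 0 <= A i i.
Proof.
move=> [_ qA]; have := qA (delta_mx i 0).
by rewrite dagger_delta -rowE -colE !mxE.
Qed.

Lemma psd_scale n (A : 'M[C]_n) c : 0 <= c -> psd A -> psd (c *: A).
Proof.
move=> c0 [hA qA]; split.
  rewrite /dagger map_mxZ /= geC0_conj // linearZ /= -/(dagger A) hA //.
move=> v; rewrite -scalemxAr -scalemxAl mxE; exact: mulr_ge0.
Qed.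

End Psd.

From mathcomp Require Import sesquilinear spectral.
Local Open Scope ring_scope.

Section Tr.
Variable C : numClosedFieldType.

Lemma daggerT m n (A : 'M[C]_(m, n)) : dagger A = (map_mx Num.conj A^T).
Proof. by apply/matrixP => i j; rewrite !mxE. Qed.

Lemma tr_psd_ge0 n (A B : 'M[C]_n) : psd A -> psd B -> 0 <= \tr (A *m B).
Proof.
move=> pA pB.
have nA : A \is normalmx.
  have hA : map_mx Num.conj A^T = A.
    by apply/matrixP => i j; case: pA => /matrixP/(_ i j) + _; rewrite !mxE.
  by apply/normalmxP; rewrite hA.
have := orthomx_spectralP nA.
set P := spectralmx A; set d := spectral_diag A => eA.
have uP : P \is unitarymx by exact: spectral_unitarymx.
have iP : invmx P = dagger P.
  by rewrite invmx_unitary //; apply/matrixP=> i j; rewrite !mxE.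
have PPd : P *m dagger P = 1%:M by rewrite -iP mulmxV // unitarymx_unit.
rewrite iP in eA.
have eD : diag_mx d = P *m A *m dagger P.
  by rewrite eA !mulmxA PPd mul1mx -mulmxA PPd mulmx1.
have -> : \tr (A *m B) = \tr (diag_mx d *m (P *m B *m dagger P)).
  by rewrite eA -!mulmxA mxtrace_mulC -!mulmxA.
rewrite mul_diag_mx /mxtrace. apply: sumr_ge0 => i _; rewrite mxE.
apply: mulr_ge0.
  have := psd_diag i (psd_conj (dagger P) pA); rewrite daggerK -eD mxE eqxx mulr1n.
  done.
have := psd_diag i (psd_conj (dagger P) pB); rewrite daggerK; done.
Qed.

End Tr.

Section Rank1.
Variable C : numClosedFieldType.

Lemma conj_sign b : Num.conj ((-1) ^+ b : C) = (-1) ^+ b.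
Proof. exact: rmorph_sign. Qed.

Definition wv (y b : bool) : 'cV[C]_2 :=
  \col_i (if i == 0 then 1 else (if y then 'i else 1) * (-1) ^+ b).

Lemma proj_rank1 y b :
  proj_of (if y then sigma_y C else sigma_x C) b = 2^-1 *: (wv y b *m dagger (wv y b)).
Proof.
have Hi : 'i * 'i = -1 :> C by rewrite -expr2 sqrCi.
apply/matrixP => i j; rewrite /proj_of !mxE big_ord1 !mxE.
have cM : forall u v : C, Num.conj (u * v) = Num.conj u * Num.conj v by move=> u v; exact: rmorphM.
have cN : forall x : C, Num.conj (- x) = - Num.conj x by move=> x; exact: rmorphN.
have sg : forall b : bool, (-1) ^+ b = (if b then -1 else 1) :> C by case.
case: (ord2P i) => ->; case: (ord2P j) => ->; case: y; rewrite !sg; case: b;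
  rewrite /sigma_y /sigma_x !mxE /= ?cM ?cN ?conjCi ?conjC1; ring: Hi.
Qed.

Lemma kron_scale m n c (A : 'M[C]_m) (B : 'M[C]_n) : kron (c *: A) B = c *: kron A B.
Proof. by apply/matrixP => i j; rewrite !mxE mulrA. Qed.

Lemma kron_rank1 n (w : 'cV[C]_2) (N : 'M[C]_n) :
  let W := \matrix_(k, j) (w (tens_idx k).1 0 * ((tens_idx k).2 == j)%:R) : 'M[C]_(2 * n, n) in
  kron (w *m dagger w) N = W *m N *m dagger W.
Proof.
move=> W; apply/matrixP => k l.
case/mxvec_indexP: k => i j; case/mxvec_indexP: l => i' j'.
rewrite kronE !mxE big_ord1 !mxE.
rewrite (bigD1 j') //= big1 => [|p /negbTE pj]; last first.
  by rewrite !mxE tens_mxvec /= (eq_sym j') pj mulr0n mulr0 rmorph0 mulr0.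
rewrite !mxE tens_mxvec /= eqxx mulr1n mulr1 addr0.
rewrite (bigD1 j) //= big1 => [|p /negbTE pj]; last first.
  by rewrite !mxE tens_mxvec /= (eq_sym j) pj mulr0n mulr0 mul0r.
rewrite !mxE tens_mxvec /= eqxx mulr1n mulr1 addr0.
by rewrite mulrAC.
Qed.

Lemma Q_ge0 d y b (N : 'M[C]_d) (T : 'M[C]_(2 * d)) :
  psd N -> psd T ->
  0 <= \tr (kron (proj_of (if y then sigma_y C else sigma_x C) b) N *m T).
Proof.
move=> pN pT; apply: tr_psd_ge0 => //.
rewrite proj_rank1 kron_scale kron_rank1; apply: psd_scale.
  by rewrite invr_ge0 ler0n.
set W := \matrix_(_, _) _.
have := psd_conj (dagger W) pN; rewrite daggerK; done.
Qed.

End Rank1.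

Section Fm.
Variable C : numClosedFieldType.
Implicit Types f g : bool -> bool -> bool -> bool -> bool -> bool -> C.

Definition Fm f : C :=
  \sum_(a : bool) \sum_(b : bool) \sum_(c : bool) ((-1) ^+ a * (-1) ^+ b * (-1) ^+ c *
    (f a b c false false true + f a b c false true false + f a b c true false false
     - f a b c true true true)).

Lemma Fm_ext f g : (forall a b c x y z, f a b c x y z = g a b c x y z) -> Fm f = Fm g.
Proof. by move=> e; rewrite /Fm; do 3 (apply: eq_bigr => ? _); rewrite !e. Qed.

Lemma Fm_add f g : Fm (fun a b c x y z => f a b c x y z + g a b c x y z) = Fm f + Fm g.
Proof.
rewrite /Fm -big_split; apply: eq_bigr => a _; rewrite -big_split; apply: eq_bigr => b _.
rewrite -big_split; apply: eq_bigr => c _ /=; ring.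
Qed.

Lemma Fm0 : Fm (fun _ _ _ _ _ _ => 0) = 0.
Proof. by rewrite /Fm big1 // => a _; rewrite big1 // => b _; rewrite big1 // => c _ /=; ring. Qed.

Lemma Fm_sum n (h : 'I_n -> bool -> bool -> bool -> bool -> bool -> bool -> C) :
  Fm (fun a b c x y z => \sum_l h l a b c x y z) = \sum_l Fm (h l).
Proof.
elim: n h => [|n IH] h.
  rewrite big_ord0; transitivity (Fm (fun _ _ _ _ _ _ => 0)); last exact: Fm0.
  by apply: Fm_ext => *; rewrite big_ord0.
rewrite big_ord_recr /= -IH -Fm_add; apply: Fm_ext => * /=; by rewrite big_ord_recr.
Qed.

Lemma Fm_scale k f : Fm (fun a b c x y z => k * f a b c x y z) = k * Fm f.
Proof.
rewrite /Fm mulr_sumr; apply: eq_bigr => a _; rewrite mulr_sumr; apply: eq_bigr => b _.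
rewrite mulr_sumr; apply: eq_bigr => c _; ring.
Qed.

Lemma sg (b : bool) : (-1) ^+ b = (if b then -1 else 1) :> C.
Proof. by case: b; rewrite ?expr0 ?expr1. Qed.

End Fm.

Section Fact.
Variable C : numClosedFieldType.
Local Notation s b := ((-1) ^+ b : C).

Lemma Fm_fact1 (T : bool -> bool -> bool -> bool -> C) (P : bool -> bool -> C) :
  let E x y := \sum_(a : bool) \sum_(b : bool) s a * s b * T a b x y in
  let G z := \sum_(c : bool) s c * P c z in
  Fm (fun a b c x y z => T a b x y * P c z)
  = E false false * G true + E false true * G false + E true false * G false
    - E true true * G true.
Proof. rewrite /Fm /= !big_bool /= ?sg ?expr0 ?expr1; ring. Qed.

Lemma Fm_fact2 (A : bool -> bool -> C) (Q : bool -> bool -> bool -> bool -> C) :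
  let E x := \sum_(a : bool) s a * A a x in
  let G y z := \sum_(b : bool) \sum_(c : bool) s b * s c * Q b c y z in
  Fm (fun a b c x y z => A a x * Q b c y z)
  = E false * (G false true + G true false) + E true * (G false false - G true true).
Proof. rewrite /Fm /= !big_bool /= ?sg ?expr0 ?expr1; ring. Qed.

Lemma Fm_fact3 (B : bool -> bool -> C) (Q : bool -> bool -> bool -> bool -> C) :
  let E y := \sum_(b : bool) s b * B b y in
  let G x z := \sum_(a : bool) \sum_(c : bool) s a * s c * Q a c x z in
  Fm (fun a b c x y z => B b y * Q a c x z)
  = E false * (G false true + G true false) + E true * (G false false - G true true).
Proof. rewrite /Fm /= !big_bool /= ?sg ?expr0 ?expr1; ring. Qed.

End Fact.

Section Type1.
Variable C : numClosedFieldType.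
Local Notation s b := ((-1) ^+ b : C).

Lemma scale_tr n (c : C) (M R : 'M[C]_n) : c * \tr (M *m R) = \tr ((c *: M) *m R).
Proof. by rewrite -scalemxAl mxtraceZ. Qed.

Lemma corr_xy m (O1 : 'M[C]_2) (R : 'M[C]_(2 * m)) (N : bool -> 'M[C]_m) :
  \sum_(a : bool) \sum_(b : bool) s a * s b * \tr (kron (proj_of O1 a) (N b) *m R)
  = \tr (kron O1 (N false - N true) *m R).
Proof.
rewrite !big_bool /= ?sg ?expr0 ?expr1 !scale_tr -!mxtraceD -!mulmxDl.
congr (\tr (_ *m R)); apply/matrixP => k l.
case/mxvec_indexP: k => i j; case/mxvec_indexP: l => i' j'.
rewrite !mxE !tens_mxvec /= /proj_of ?mxE ?expr0 ?expr1.
generalize ((i == i')%:R : C) => e; by field.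
Qed.

End Type1.

Section Type1b.
Variable C : numClosedFieldType.
Local Notation s b := ((-1) ^+ b : C).

Lemma proj_diff (O : 'M[C]_2) : proj_of O false - proj_of O true = O.
Proof.
apply/matrixP => i j; rewrite /proj_of !mxE ?expr0 ?expr1.
by generalize ((i == j)%:R : C) => e; field.
Qed.

Lemma proj_sum (O : 'M[C]_2) : proj_of O false + proj_of O true = 1%:M.
Proof.
apply/matrixP => i j; rewrite /proj_of !mxE ?expr0 ?expr1.
by generalize ((i == j)%:R : C) => e; field.
Qed.

Lemma corr_AB x y (R : 'M[C]_(2 * 2)) :
  \sum_(a : bool) \sum_(b : bool) s a * s b * \tr (kron (MA C a x) (MB C b y) *m R)
  = \tr (kron (obsA C x) (obsB C y) *m R).
Proof. by rewrite /MA (corr_xy _ R (fun b => MB C b y)) /MB proj_diff. Qed.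

Lemma sum_sc (P : bool -> C) : \sum_(c : bool) s c * P c = P false - P true.
Proof. by rewrite big_bool /= ?expr0 ?expr1; ring. Qed.

Lemma F1_eq (R : 'M[C]_(2 * 2)) (PC : bool -> bool -> C) :
  Fm (fun a b c x y z => \tr (kron (MA C a x) (MB C b y) *m R) * PC c z)
  = 2 * ((PC false true - PC true true) - 'i * (PC false false - PC true false))
      * R (mxvec_index 1 1) (mxvec_index 0 0)
  + 2 * ((PC false true - PC true true) + 'i * (PC false false - PC true false))
      * R (mxvec_index 0 0) (mxvec_index 1 1).
Proof.
have Hi : 'i * 'i = -1 :> C by rewrite -expr2 sqrCi.
rewrite (Fm_fact1 (fun a b x y => \tr (kron (MA C a x) (MB C b y) *m R))) /=.
rewrite !corr_AB !(sum_sc (fun c => PC c _)).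
rewrite !tr_kron !sum2 /obsA /obsB /sigma_x /sigma_y !mxE /=.
Time ring: Hi.
Qed.

End Type1b.

Section Bound1.
Variable C : numClosedFieldType.

Lemma trace_state4 (R : 'M[C]_(2 * 2)) : \tr R = 1 ->
  R (mxvec_index 0 0) (mxvec_index 0 0) = 1 - R (mxvec_index 0 1) (mxvec_index 0 1)
     - R (mxvec_index 1 0) (mxvec_index 1 0) - R (mxvec_index 1 1) (mxvec_index 1 1).
Proof. rewrite /mxtrace sum_mxvec !sum2 => <-; ring. Qed.

Lemma herm_entry n (R : 'M[C]_n) i j : dagger R = R -> R i j = Num.conj (R j i).
Proof. by move=> /matrixP/(_ i j) <-; rewrite !mxE. Qed.

Lemma ge0_conj (x : C) : 0 <= x -> Num.conj x = x.
Proof. exact: geC0_conj. Qed.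

Lemma bound1 (R : 'M[C]_(2 * 2)) (PC : bool -> bool -> C) :
  is_state R -> is_cond_distr PC ->
  2 * ((PC false true - PC true true) - 'i * (PC false false - PC true false))
      * R (mxvec_index 1 1) (mxvec_index 0 0)
  + 2 * ((PC false true - PC true true) + 'i * (PC false false - PC true false))
      * R (mxvec_index 0 0) (mxvec_index 1 1) <= 2 * sqrtC 2.
Proof.
move=> [[hR qR] tR] [PC0 PC1].
set r := sqrtC 2.
have Hi : 'i * 'i = -1 :> C by rewrite -expr2 sqrCi.
have Hr : r * r = 2 by rewrite -expr2 sqrtCK.
have r0 : 0 <= r by rewrite sqrtC_ge0 ler0n.
have cM : forall u v : C, Num.conj (u * v) = Num.conj u * Num.conj v by move=> u v; exact: rmorphM.
have cD : forall u v : C, Num.conj (u + v) = Num.conj u + Num.conj v by move=> u v; exact: rmorphD.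
have cN : forall u : C, Num.conj (- u) = - Num.conj u by move=> u; exact: rmorphN.
set g0 := PC false false - PC true false.
set g1 := PC false true - PC true true.
have cg0 : Num.conj g0 = g0 by rewrite /g0 cD cN !ge0_conj.
have cg1 : Num.conj g1 = g1 by rewrite /g1 cD cN !ge0_conj.
have c2 : Num.conj (2 : C) = 2 by rewrite ge0_conj // ler0n.
set beta := - (r / 2) * (g1 + 'i * g0).
have cb : Num.conj beta = - (r / 2) * (g1 - 'i * g0).
  rewrite /beta cM cN cM cD cM conjCi cg0 cg1 ge0_conj ?fmorphV ?c2 //; first by field.
set v : 'cV[C]_(2 * 2) := \col_k (if tens_idx k == (0, 0) then 1
                                   else if tens_idx k == (1, 1) then beta else 0).
have qv := qR v.
rewrite quadE sum_mxvec !sum2 !sum_mxvec !sum2 in qv.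
rewrite /v !mxE !tens_mxvec /= conjC1 conjC0 cb in qv.
set Q := (X in 0 <= X) in qv.
have pR : psd R by [].
have d1 := psd_diag (mxvec_index 0 1) pR.
have d2 := psd_diag (mxvec_index 1 0) pR.
have d3 := psd_diag (mxvec_index 1 1) pR.
rewrite -subr_ge0.
have -> : 2 * r - (2 * (g1 - 'i * g0) * R (mxvec_index 1 1) (mxvec_index 0 0) +
  2 * (g1 + 'i * g0) * R (mxvec_index 0 0) (mxvec_index 1 1)) =
  2 * r * (Q + 2 * (PC true true * PC false true + PC true false * PC false false)
     * R (mxvec_index 1 1) (mxvec_index 1 1)
     + R (mxvec_index 0 1) (mxvec_index 0 1) + R (mxvec_index 1 0) (mxvec_index 1 0)).
  rewrite /Q /beta /g0 /g1 (trace_state4 tR).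
  have e1 : PC true true = 1 - PC false true by rewrite -(PC1 true); ring.
  have e0 : PC true false = 1 - PC false false by rewrite -(PC1 false); ring.
  rewrite e1 e0.
  by field: Hi Hr.
apply: mulr_ge0; first by apply: mulr_ge0 => //; rewrite ler0n.
apply: addr_ge0; last done.
apply: addr_ge0; last done.
apply: addr_ge0; first done.
apply: mulr_ge0; last done.
apply: mulr_ge0; first by rewrite ler0n.
by apply: addr_ge0; apply: mulr_ge0.
Qed.
End Bound1.

Section Bound2.
Variable C : numClosedFieldType.
Local Notation s b := ((-1) ^+ b : C).

Lemma bound2 (R : 'M[C]_2) (u v : C) :
  is_state R -> Num.conj u = u -> Num.conj v = v -> 0 <= 4 - u * u -> 0 <= 4 - v * v ->
  \tr (sigma_x C *m R) * u + \tr (sigma_y C *m R) * v <= 2 * sqrtC 2.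
Proof.
move=> [[hR qR] tR] cu cv hu hv.
set r := sqrtC 2.
have Hi : 'i * 'i = -1 :> C by rewrite -expr2 sqrCi.
have Hr : r * r = 2 by rewrite -expr2 sqrtCK.
have r0 : 0 <= r by rewrite sqrtC_ge0 ler0n.
have cM : forall a b : C, Num.conj (a * b) = Num.conj a * Num.conj b by move=> a b; exact: rmorphM.
have cD : forall a b : C, Num.conj (a + b) = Num.conj a + Num.conj b by move=> a b; exact: rmorphD.
have cN : forall a : C, Num.conj (- a) = - Num.conj a by move=> a; exact: rmorphN.
have c4 : Num.conj (4 : C) = 4 by rewrite ge0_conj // ler0n.
set beta := - (r / 4) * (u + 'i * v).
have cb : Num.conj beta = - (r / 4) * (u - 'i * v).
  rewrite /beta cM cN cM cD cM conjCi cu cv ge0_conj ?fmorphV ?c4 //; first by field.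
have qv := qR (\col_k (if k == 0 then 1 else beta)).
rewrite quadE !sum2 !mxE /= conjC1 cb in qv.
set Q := (X in 0 <= X) in qv.
have pR : psd R by [].
have d1 := psd_diag 1 pR.
have t1 : R 0 0 = 1 - R 1 1 by rewrite -tR /mxtrace sum2; ring.
rewrite -subr_ge0.
have -> : 2 * r - (\tr (sigma_x C *m R) * u + \tr (sigma_y C *m R) * v) =
  2 * r * (Q + 8^-1 * ((4 - u * u) + (4 - v * v)) * R 1 1).
  rewrite /Q /beta !trE !sum2 /sigma_x /sigma_y !mxE /= t1.
  by field: Hi Hr.
apply: mulr_ge0; first by apply: mulr_ge0 => //; rewrite ler0n.
apply: addr_ge0; first done.
apply: mulr_ge0; last done.
apply: mulr_ge0; first by rewrite invr_ge0 ler0n.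
exact: addr_ge0.
Qed.

Lemma sq_bound (a0 a1 a2 a3 b0 b1 b2 b3 : C) (t : bool) :
  0 <= a0 -> 0 <= a1 -> 0 <= a2 -> 0 <= a3 ->
  0 <= b0 -> 0 <= b1 -> 0 <= b2 -> 0 <= b3 ->
  a0 + a1 + a2 + a3 = 1 -> b0 + b1 + b2 + b3 = 1 ->
  forall u, u = (a0 - a1 - a2 + a3) + s t * (b0 - b1 - b2 + b3) ->
  0 <= 4 - u * u.
Proof.
move=> ha0 ha1 ha2 ha3 hb0 hb1 hb2 hb3 sa sb u ->.
have ea : a0 = 1 - a1 - a2 - a3 by rewrite -sa; ring.
have eb : b0 = 1 - b1 - b2 - b3 by rewrite -sb; ring.
case: t.
- have -> : 4 - (a0 - a1 - a2 + a3 + s true * (b0 - b1 - b2 + b3)) * (a0 - a1 - a2 + a3 + s true * (b0 - b1 - b2 + b3)) = (2 * (a1 + a2) + 2 * (b0 + b3)) * (2 * (a0 + a3) + 2 * (b1 + b2)).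
    rewrite expr1 ea eb; ring.
  by apply: mulr_ge0; apply: addr_ge0; apply: mulr_ge0; rewrite ?ler0n //; apply: addr_ge0.
- have -> : 4 - (a0 - a1 - a2 + a3 + s false * (b0 - b1 - b2 + b3)) * (a0 - a1 - a2 + a3 + s false * (b0 - b1 - b2 + b3)) = (2 * (a1 + a2) + 2 * (b1 + b2)) * (2 * (a0 + a3) + 2 * (b0 + b3)).
    rewrite expr0 ea eb; ring.
  by apply: mulr_ge0; apply: addr_ge0; apply: mulr_ge0; rewrite ?ler0n //; apply: addr_ge0.
Qed.

End Bound2.



Section Type23.
Variable C : numClosedFieldType.
Local Notation s b := ((-1) ^+ b : C).

Lemma kronDl m n (A A' : 'M[C]_m) (B : 'M[C]_n) : kron (A + A') B = kron A B + kron A' B.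
Proof. by apply/matrixP => i j; rewrite !mxE mulrDl. Qed.

Lemma kronDr m n (A : 'M[C]_m) (B B' : 'M[C]_n) : kron A (B + B') = kron A B + kron A B'.
Proof. by apply/matrixP => i j; rewrite !mxE mulrDr. Qed.

Lemma kron11 m n : kron (1%:M : 'M[C]_m) (1%:M : 'M[C]_n) = 1%:M.
Proof.
apply/matrixP => k l; case/mxvec_indexP: k => i j; case/mxvec_indexP: l => i' j'.
rewrite kronE !mxE.
have inj : injective (fun p : 'I_m * 'I_n => mxvec_index p.1 p.2).
  by move=> p q /(congr1 (@tens_idx m n)); rewrite !tens_mxvec; case: p; case: q.
have := inj_eq inj (i, j) (i', j'); rewrite /= => ->.
by rewrite xpair_eqE; case: (i == i'); case: (j == j'); rewrite /= ?mulr1 ?mul0r ?mulr0.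
Qed.

Lemma Q_sum d (M : bool -> 'M[C]_2) (N : bool -> 'M[C]_d) (T : 'M[C]_(2 * d)) :
  M false + M true = 1%:M -> N false + N true = 1%:M -> \tr T = 1 ->
  \tr (kron (M false) (N false) *m T) + \tr (kron (M false) (N true) *m T)
  + \tr (kron (M true) (N false) *m T) + \tr (kron (M true) (N true) *m T) = 1.
Proof.
move=> hM hN hT; rewrite -!mxtraceD -!mulmxDl -kronDr -addrA -kronDr -kronDl hM hN.
by rewrite kron11 mul1mx.
Qed.


Lemma corr1 (O : bool -> 'M[C]_2) (R : 'M[C]_2) x :
  \sum_(a : bool) s a * \tr (proj_of (O x) a *m R) = \tr (O x *m R).
Proof.
rewrite big_bool /= ?expr0 ?expr1 -[in RHS](proj_diff (O x)) mulmxBl linearB /=; ring.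
Qed.

Lemma qfacts d (T : 'M[C]_(2 * d)) (N : bool -> bool -> 'M[C]_d) (M : bool -> bool -> 'M[C]_2) :
  is_state T -> (forall z, is_povm (fun c => N c z)) ->
  (forall b y, M b y = proj_of (if y then sigma_y C else sigma_x C) b) ->
  let q y z b c := \tr (kron (M b y) (N c z) *m T) in
  (forall y z b c, 0 <= q y z b c) /\
  (forall y z, q y z false false + q y z false true + q y z true false + q y z true true = 1).
Proof.
move=> [pT tT] hN hM q; split.
  move=> y z b c; rewrite /q hM; exact: (@Q_ge0 C d y b (N c z) T ((hN z).1 c) pT).
move=> y z; rewrite /q; apply: (@Q_sum d (fun b => M b y) (fun c => N c z) T) => //; last exact: (hN z).2.
by rewrite !hM proj_sum.
Qed.

Lemma G_eq (q : bool -> bool -> C) :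
  \sum_(b : bool) \sum_(c : bool) s b * s c * q b c
  = q false false - q false true - q true false + q true true.
Proof. by rewrite !big_bool /= ?expr0 ?expr1; ring. Qed.

Lemma core23 (R : 'M[C]_2) (q : bool -> bool -> bool -> bool -> C) :
  is_state R ->
  (forall y z b c, 0 <= q y z b c) ->
  (forall y z, q y z false false + q y z false true + q y z true false + q y z true true = 1) ->
  forall G : bool -> bool -> C,
  (forall y z, G y z = q y z false false - q y z false true - q y z true false + q y z true true) ->
  \tr (sigma_x C *m R) * (G false true + G true false)
  + \tr (sigma_y C *m R) * (G false false - G true true) <= 2 * sqrtC 2.
Proof.
move=> sR q0 q1 G hG.
have cD : forall a b : C, Num.conj (a + b) = Num.conj a + Num.conj b by move=> a b; exact: rmorphD.
have cN : forall a : C, Num.conj (- a) = - Num.conj a by move=> a; exact: rmorphN.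
have cG : forall y z, Num.conj (G y z) = G y z.
  by move=> y z; rewrite hG !cD !cN !ge0_conj.
apply: bound2 => //.
- by rewrite cD !cG.
- by rewrite cD cN !cG.
- apply: (@sq_bound C (q false true false false) (q false true false true)
    (q false true true false) (q false true true true) (q true false false false)
    (q true false false true) (q true false true false) (q true false true true) false);
  try apply: q0; try apply: q1.
  by rewrite expr0 mul1r !hG.
- apply: (@sq_bound C (q false false false false) (q false false false true)
    (q false false true false) (q false false true true) (q true true false false)
    (q true true false true) (q true true true false) (q true true true true) true);
  try apply: q0; try apply: q1.
  by rewrite expr1 !hG; ring.
Qed.


Lemma F2_le d (RA : 'M[C]_2) (T : 'M[C]_(2 * d)) (N : bool -> bool -> 'M[C]_d) :
  is_state RA -> is_state T -> (forall z, is_povm (fun c => N c z)) ->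
  Fm (fun a b c x y z => \tr (MA C a x *m RA) * \tr (kron (MB C b y) (N c z) *m T))
  <= 2 * sqrtC 2.
Proof.
move=> sR sT hN.
rewrite (Fm_fact2 (fun a x => \tr (MA C a x *m RA))
                  (fun b c y z => \tr (kron (MB C b y) (N c z) *m T))) /=.
rewrite /MA !(corr1 (obsA C)) /obsA /=.
have [q0 q1] := @qfacts d T N (MB C) sT hN (fun b y => erefl).
apply: (core23 sR q0 q1
  (G := fun y z => \sum_(b : bool) \sum_(c : bool) s b * s c * \tr (kron (MB C b y) (N c z) *m T))).
move=> y z; exact: G_eq.
Qed.

Lemma F3_le d (RB : 'M[C]_2) (T : 'M[C]_(2 * d)) (N : bool -> bool -> 'M[C]_d) :
  is_state RB -> is_state T -> (forall z, is_povm (fun c => N c z)) ->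
  Fm (fun a b c x y z => \tr (MB C b y *m RB) * \tr (kron (MA C a x) (N c z) *m T))
  <= 2 * sqrtC 2.
Proof.
move=> sR sT hN.
rewrite (Fm_fact3 (fun b y => \tr (MB C b y *m RB))
                  (fun a c x z => \tr (kron (MA C a x) (N c z) *m T))) /=.
rewrite /MB !(corr1 (obsB C)) /obsB /=.
have [q0 q1] := @qfacts d T N (MA C) sT hN (fun b y => erefl).
apply: (core23 sR q0 q1
  (G := fun x z => \sum_(a : bool) \sum_(c : bool) s a * s c * \tr (kron (MA C a x) (N c z) *m T))).
move=> y z; exact: G_eq.
Qed.

End Type23.



Section Main.
Variable C : numClosedFieldType.

Lemma F1_le (R : 'M[C]_(2 * 2)) (PC : bool -> bool -> C) :
  is_state R -> is_cond_distr PC ->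
  Fm (fun a b c x y z => \tr (kron (MA C a x) (MB C b y) *m R) * PC c z) <= 2 * sqrtC 2.
Proof. by move=> sR hPC; rewrite F1_eq; apply: bound1. Qed.

Lemma Fm_mermin (V : C) : Fm (mermin V) = 4 * V.
Proof.
rewrite /Fm /mermin !big_bool /= ?expr0 ?expr1.
by field.
Qed.


Lemma no_model (V : C) : 1 / sqrtC 2 < V -> ~ StLHS (mermin V).
Proof.
move=> hV [n1 [n2 [n3 [r [rhoAB [PC [p [rhoA [dB [tauBC [NB [q [rhoB [dA [tauAC [NA H]]]]]]]]]]]]]]]].
case: H => [[r0 p0 q0 sum1] [h1 h2 h3 hP]].
pose k : C := sqrtC 2.
have e : Fm (mermin V) =
  \sum_l r l * Fm (fun a b c x y z => \tr (kron (MA C a x) (MB C b y) *m rhoAB l) * PC l c z)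
  + \sum_l p l * Fm (fun a b c x y z => \tr (MA C a x *m rhoA l)
                       * \tr (kron (MB C b y) (NB l c z) *m tauBC l))
  + \sum_l q l * Fm (fun a b c x y z => \tr (MB C b y *m rhoB l)
                       * \tr (kron (MA C a x) (NA l c z) *m tauAC l)).
  rewrite (Fm_ext hP) !Fm_add !Fm_sum.
  congr (_ + _ + _); apply: eq_bigr => l _; rewrite -Fm_scale; apply: Fm_ext => *; ring.
have le : Fm (mermin V) <= (\sum_l r l + \sum_l p l + \sum_l q l) * (2 * k).
  rewrite e mulrDl mulrDl !mulr_suml.
  apply: lerD; first apply: lerD.
  - apply: ler_sum => l _; apply: ler_wpM2l => //.
    by have [? ?] := h1 l; apply: F1_le.
  - apply: ler_sum => l _; apply: ler_wpM2l => //.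
    by have [? ? ?] := h2 l; apply: F2_le.
  - apply: ler_sum => l _; apply: ler_wpM2l => //.
    by have [? ? ?] := h3 l; apply: F3_le.
rewrite Fm_mermin sum1 mul1r in le.
have k0 : 0 < k by rewrite sqrtC_gt0 ltr0n.
have Hk : k * k = 2 by rewrite -expr2 sqrtCK.
have g1 : 1 < V * k by rewrite -ltr_pdivrMr.
have g2 : 4 < 4 * (V * k) by rewrite -[X in X < _]mulr1 ltr_pM2l // ltr0n.
have g3 : 4 * V * k <= 2 * k * k by rewrite ler_wpM2r // ltW.
rewrite -[2 * k * k]mulrA Hk -mulrA in g3.
have := lt_le_trans g2 g3; rewrite (_ : 2 * 2 = 4 :> C) ?ltxx //.
by rewrite -natrM.
Qed.

End Main.



Section Model.
Variable C : numClosedFieldType.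
Local Notation s b := ((-1) ^+ b : C).

Definition psi (e : C) : 'cV[C]_(2 * 2) :=
  \col_m (if tens_idx m == (0, 0) then 1 else if tens_idx m == (1, 1) then e else 0).

Lemma tr_rank1 n (K : 'M[C]_n) (v : 'cV[C]_n) c :
  \tr (K *m (c *: (v *m dagger v))) = c * (dagger v *m K *m v) 0 0.
Proof.
rewrite -scalemxAr mxtraceZ mulmxA mxtrace_mulC mulmxA; congr (_ * _).
by rewrite /mxtrace big_ord1.
Qed.

Lemma T_formula (e : C) a b x y :
  \tr (kron (MA C a x) (MB C b y) *m (2^-1 *: (psi e *m dagger (psi e))))
  = 8^-1 * (1 + e * Num.conj e)
    + 8^-1 * s a * s b * (obsA C x 0 1 * obsB C y 0 1 * e
                          + obsA C x 1 0 * obsB C y 1 0 * Num.conj e).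
Proof.
rewrite tr_rank1 quadE sum_mxvec !sum2 !sum_mxvec !sum2 /psi !mxE !tens_mxvec /=.
rewrite /MA /MB /proj_of /obsA /obsB /sigma_x /sigma_y.
case: x; case: y; rewrite !mxE /= ?conjC1 ?conjC0; by field.
Qed.


Lemma sum4 (F : 'I_4 -> C) :
  \sum_(l < 4) F l = F (@Ordinal 4 0 isT) + F (@Ordinal 4 1 isT)
                    + F (@Ordinal 4 2 isT) + F (@Ordinal 4 3 isT).
Proof.
rewrite !big_ord_recr big_ord0 /= add0r.
by congr (F _ + F _ + F _ + F _); apply: val_inj.
Qed.

Definition sgn1 (l : 'I_4) : C := if (l < 2)%N then 1 else -1.
Definition sgn2 (l : 'I_4) : C := if odd l then -1 else 1.
Definition ee (l : 'I_4) : C := (sgn1 l + 'i * sgn2 l) / sqrtC 2.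
Definition rhoM (l : 'I_4) : 'M[C]_(2 * 2) := 2^-1 *: (psi (ee l) *m dagger (psi (ee l))).
Definition PCM (V : C) (l : 'I_4) (c z : bool) : C :=
  (1 + s c * (V * sqrtC 2) * (if z then sgn1 l else sgn2 l)) / 2.

Lemma conj_ee l : Num.conj (ee l) = (sgn1 l - 'i * sgn2 l) / sqrtC 2.
Proof.
have cM : forall u v : C, Num.conj (u * v) = Num.conj u * Num.conj v by move=> u v; exact: rmorphM.
have cD : forall u v : C, Num.conj (u + v) = Num.conj u + Num.conj v by move=> u v; exact: rmorphD.
have c1 : Num.conj (sgn1 l) = sgn1 l by rewrite /sgn1; case: (_ < _)%N; rewrite ?conjC1 ?conjCN1.
have c2 : Num.conj (sgn2 l) = sgn2 l by rewrite /sgn2; case: (odd _); rewrite ?conjC1 ?conjCN1.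
have ck : Num.conj ((sqrtC 2)^-1 : C) = (sqrtC 2)^-1.
  by rewrite ge0_conj // invr_ge0 sqrtC_ge0 ler0n.
rewrite /ee cM cD cM conjCi c1 c2 ck.
by rewrite mulNr.
Qed.

Lemma model_eq (V : C) a b c x y z :
  mermin V a b c x y z =
  \sum_(l < 4) 4^-1 * \tr (kron (MA C a x) (MB C b y) *m rhoM l) * PCM V l c z.
Proof.
have Hi : 'i * 'i = -1 :> C by rewrite -expr2 sqrCi.
have k0 : sqrtC 2 != 0 :> C by rewrite sqrtC_eq0 pnatr_eq0.
have Hk : sqrtC 2 * sqrtC 2 = 2 :> C by rewrite -expr2 sqrtCK.
rewrite sum4 /rhoM !T_formula !conj_ee /PCM /ee /sgn1 /sgn2 /=.
rewrite /mermin !signr_addb.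
case: x; case: y; case: z; rewrite /obsA /obsB /sigma_x /sigma_y !mxE /= ?expr0 ?expr1;
  move: ((-1) ^+ a : C) ((-1) ^+ b : C) ((-1) ^+ c : C) => sa sb sc;
  field: Hi Hk.
all: exact: k0.
Qed.


Lemma psd1 : psd (1%:M : 'M[C]_1).
Proof.
split.
  by apply/matrixP => i j; rewrite [i]ord1 [j]ord1 !mxE eqxx /= conjC1.
move=> v; rewrite mulmx1 mxE big_ord1 !mxE mulrC; exact: mul_conjC_ge0.
Qed.

Lemma rhoM_state l : is_state (rhoM l).
Proof.
have Hi : 'i * 'i = -1 :> C by rewrite -expr2 sqrCi.
have k0 : sqrtC 2 != 0 :> C by rewrite sqrtC_eq0 pnatr_eq0.
have Hk : sqrtC 2 * sqrtC 2 = 2 :> C by rewrite -expr2 sqrtCK.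
split.
  rewrite /rhoM; apply: psd_scale; first by rewrite invr_ge0 ler0n.
  by have := psd_conj (dagger (psi (ee l))) psd1; rewrite daggerK mulmx1.
rewrite /rhoM mxtraceZ mxtrace_mulC /mxtrace big_ord1 mxE sum_mxvec !sum2.
rewrite /psi !mxE !tens_mxvec /= conj_ee.
rewrite ?conjC1 ?conjC0 /ee /sgn1 /sgn2.
case: (_ < _)%N; case: (odd _); field: Hi Hk; exact: k0.
Qed.

Lemma PCM_distr V l : 0 <= V * sqrtC 2 -> V * sqrtC 2 <= 1 -> is_cond_distr (PCM V l).
Proof.
set t := V * sqrtC 2 => t0 t1; split.
  move=> c z.
  have -> : PCM V l c z = (1 + ((-1) ^+ c * (if z then sgn1 l else sgn2 l)) * t) / 2.
    by rewrite /PCM -/t; congr ((1 + _) / 2); ring.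
  have h : forall e : C, e = 1 \/ e = -1 -> 0 <= (1 + e * t) / 2.
    move=> e [] ->.
      by apply: divr_ge0; rewrite ?ler0n // mul1r; apply: addr_ge0.
    by apply: divr_ge0; rewrite ?ler0n // mulN1r subr_ge0.
  apply: h; rewrite /sgn1 /sgn2.
  by rewrite sg; case: c; case: z; case: (l < 2)%N; case: (odd l);
    rewrite ?mul1r ?mulr1 ?mulN1r ?opprK; auto.
move=> z; rewrite /PCM !sg; by field.
Qed.

Lemma model_exists (V : C) : 0 < V -> V <= 1 / sqrtC 2 -> StLHS (mermin V).
Proof.
move=> V0 hV.
have k0 : 0 < sqrtC 2 :> C by rewrite sqrtC_gt0 ltr0n.
have t0 : 0 <= V * sqrtC 2 by rewrite mulr_ge0 // ltW.
have t1 : V * sqrtC 2 <= 1 by rewrite -ler_pdivlMr.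
exists 4%N, 0%N, 0%N, (fun _ => 4^-1), rhoM, (PCM V), (fun _ => 0), (fun _ => 0),
  (fun _ => 1%N), (fun _ => 0), (fun _ _ _ => 0), (fun _ => 0), (fun _ => 0),
  (fun _ => 1%N), (fun _ => 0), (fun _ _ _ => 0).
split; split.
- by move=> l; rewrite invr_ge0 ler0n.
- by move=> l.
- by move=> l.
- by rewrite !big_ord0 !addr0 sum4; field.
- by move=> l; split; [exact: rhoM_state | exact: PCM_distr].
- by case.
- by case.
- by move=> a b c x y z; rewrite !big_ord0 !addr0; exact: model_eq.
Qed.

End Model.

Unset Implicit Arguments.

Theorem proposition5 (C : numClosedFieldType) (V : C) :
  0 < V -> V <= 1 ->
  (genuine_1SDI_steering (mermin V) <-> 1 / sqrtC 2 < V).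
Proof.
move=> V0 V1; split.
- move=> ng.
  have rV : V \is Num.real by exact: gtr0_real.
  have rk : (1 / sqrtC 2 : C) \is Num.real.
    by apply: ger0_real; apply: divr_ge0; [exact: ler01 | rewrite sqrtC_ge0 ler0n].
  rewrite real_ltNge //; apply/negP => hle; apply: ng; exact: model_exists.
- move=> h; exact: no_model.
Qed.
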